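(* For each $\psi\in(-\pi,\pi]$ and each $\tau>0$, $$\{(a,w)\in D_c : \operatorname{Arg}(w)=\psi,\ \tau_c(a,w)>\tau\} = \bigcup_{s>1}\frac{1}{s}\Gamma_c(\psi;\tau),$$ and consequently $$\{(a,w)\in D_c : \tau_c(a,w)>\tau\} = \bigcup_{\psi\in(-\pi,\pi]}\bigcup_{s>1}\frac{1}{s}\Gamma_c(\psi;\tau).$$
   Context: $\operatorname{Arg}(w)\in(-\pi,\pi]$ is the principal argument; $\arccos:[-1,1]\to[0,\pi]$. $D_c := \{(a,w)\in\mathbb{R}\times(\mathbb{C}\setminus\{0\}):\operatorname{Re}(w)<a<|w|\}$; $\tau_c(a,w) := \frac{1}{\sqrt{|w|^2-a^2}}[|\operatorname{Arg}(w)|-\arccos(a/|w|)]$. $a(\Omega,\psi;\tau) := -\Omega\cot(\tau\Omega-\psi)$, $\rho(\Omega,\psi;\tau) := -\Omega/\sin(\tau\Omega-\psi)$. $I_c(\psi) := (0,\psi)$ if $\psi\ge0$ and $(\psi,0)$ if $\psi\le0$. $\Gamma_c(\psi;\tau) := \{(a(\Omega,\psi;\tau),\,\rho(\Omega,\psi;\tau)e^{i\psi}) : \tau\Omega\in I_c(\psi)\}$, and $\frac1s\Gamma := \{(a/s,w/s):(a,w)\in\Gamma\}$. *)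

(* Defs.v *)
From Stdlib Require Import Reals.
From Coquelicot Require Import Coquelicot.
Open Scope R_scope.

(* Principal argument Arg(w) in (-PI, PI] (for w <> 0), defined via
   arccos : [-1,1] -> [0,PI]:  Arg w = acos(Re w / |w|) if Im w >= 0,
   and -acos(Re w / |w|) otherwise. *)
Definition Arg (w : C) : R :=
  if Rle_dec 0 (Im w) then acos (Re w / Cmod w) else - acos (Re w / Cmod w).

Definition D_c (a : R) (w : C) : Prop :=
  w <> 0%C /\ Re w < a /\ a < Cmod w.

Definition tau_c (a : R) (w : C) : R :=
  / sqrt (Cmod w ^ 2 - a ^ 2) * (Rabs (Arg w) - acos (a / Cmod w)).

Definition a_fun (Om psi tau : R) : R := - Om * (cos (tau * Om - psi) / sin (tau * Om - psi)).
Definition rho_fun (Om psi tau : R) : R := - Om / sin (tau * Om - psi).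

Definition I_c (psi x : R) : Prop :=
  if Rle_dec 0 psi then 0 < x < psi else psi < x < 0.

Definition Gamma_c (psi tau : R) (a : R) (w : C) : Prop :=
  exists Om : R, I_c psi (tau * Om) /\
    a = a_fun Om psi tau /\
    w = Cmult (RtoC (rho_fun Om psi tau)) (cos psi, sin psi).

Definition scaled (s : R) (G : R -> C -> Prop) (a : R) (w : C) : Prop :=
  exists (b : R) (z : C), G b z /\ a = b / s /\ w = Cmult (RtoC (/ s)) z.

(* Main.v *)
Require Import Defs.
From Stdlib Require Import Reals Lra.
From Coquelicot Require Import Coquelicot.
Open Scope R_scope.

Lemma sc2 p : sin p ^ 2 + cos p ^ 2 = 1.
Proof. rewrite <- (sin2_cos2 p). unfold Rsqr. ring. Qed.

Lemma cmul_eq x c d : Cmult (RtoC x) (c,d) = (x*c, x*d).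
Proof. unfold Cmult, RtoC; simpl; f_equal; ring. Qed.

Lemma cmod_polar r p : 0 <= r -> Cmod (r*cos p, r*sin p) = r.
Proof.
  intro. unfold Cmod; cbn [fst snd].
  replace ((r * cos p) ^ 2 + (r * sin p) ^ 2) with (r^2).
  - now apply sqrt_pow2.
  - pose proof (sc2 p). nra.
Qed.

Lemma sin_neg_lt p : -PI < p < 0 -> sin p < 0.
Proof.
  intro. replace p with (- - p) by ring. rewrite sin_neg.
  assert (0 < sin (-p)) by (apply sin_gt_0; lra). lra.
Qed.

Lemma Arg_polar r p : 0 < r -> -PI < p <= PI -> Arg (r*cos p, r*sin p) = p.
Proof.
  intros Hr Hp. unfold Arg, Re, Im. rewrite cmod_polar by lra. cbn [fst snd].
  replace (r * cos p / r) with (cos p) by (field; lra).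
  destruct (Rle_dec 0 (r * sin p)) as [H|H].
  - destruct (Rle_dec 0 p).
    + apply acos_cos; lra.
    + pose proof (sin_neg_lt p ltac:(lra)). nra.
  - destruct (Rle_dec 0 p).
    + pose proof (sin_ge_0 p ltac:(lra) ltac:(lra)). nra.
    + rewrite <- (cos_neg p). rewrite acos_cos by lra. ring.
Qed.

Lemma Rabs_le_PI p : -PI < p <= PI -> Rabs p <= PI.
Proof. intro. unfold Rabs; destruct Rcase_abs; lra. Qed.

Lemma cos_abs p : cos (Rabs p) = cos p.
Proof. unfold Rabs; destruct Rcase_abs; [apply cos_neg|reflexivity]. Qed.

Lemma polar_form psi r th : -PI < psi <= PI -> 0 < r -> 0 < th < Rabs psi ->
  D_c (r * cos th) (r * cos psi, r * sin psi) /\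
  Arg (r * cos psi, r * sin psi) = psi /\
  tau_c (r * cos th) (r * cos psi, r * sin psi) = (Rabs psi - th) / (r * sin th).
Proof.
  intros Hp Hr Ht.
  pose proof (Rabs_le_PI psi Hp) as HA.
  pose proof (PI_RGT_0).
  assert (Hs : 0 < sin th) by (apply sin_gt_0; lra).
  assert (Hc1 : cos th < 1) by (rewrite <- cos_0; apply cos_decreasing_1; lra).
  assert (Hc2 : cos psi < cos th) by (rewrite <- cos_abs; apply cos_decreasing_1; lra).
  split; [|split].
  - unfold D_c. split; [|split].
    + apply Cmod_gt_0. rewrite cmod_polar; lra.
    + unfold Re; cbn [fst]. nra.
    + rewrite cmod_polar by lra. nra.
  - apply Arg_polar; lra.
  - unfold tau_c. rewrite cmod_polar by lra. rewrite Arg_polar by lra.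
    replace (r * cos th / r) with (cos th) by (field; lra).
    rewrite acos_cos by lra.
    replace (r ^ 2 - (r * cos th) ^ 2) with ((r * sin th)^2) by (pose proof (sc2 th); nra).
    rewrite sqrt_pow2 by nra. unfold Rdiv. ring.
Qed.

Lemma polar_inv a w : D_c a w ->
  -PI < Arg w <= PI /\
  exists r th, 0 < r /\ 0 < th < Rabs (Arg w) /\ a = r * cos th /\
    w = (r * cos (Arg w), r * sin (Arg w)).
Proof.
  intros [Hw [H1 H2]].
  pose proof PI_RGT_0.
  destruct w as [x y].
  assert (Hr : 0 < Cmod (x,y)) by (apply Cmod_gt_0; auto).
  unfold Re in H1; cbn [fst] in H1.
  set (r := Cmod (x,y)) in *.
  assert (Hr2 : r ^ 2 = x^2 + y^2).
  { unfold r, Cmod; cbn [fst snd]. apply pow2_sqrt. nra. }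
  set (u := x / r).
  assert (Hx : x = u * r) by (unfold u; field; lra).
  assert (Hu2 : u^2 <= 1).
  { assert ((1 - u^2) * r^2 = y^2) by (assert (E: x^2 = u^2*r^2) by (rewrite Hx; ring); replace ((1-u^2)*r^2) with (r^2 - u^2*r^2) by ring; lra).
    assert (0 <= (1 - u^2) * r^2) by nra.
    assert (0 < r^2) by nra. nra. }
  assert (Hu : -1 <= u <= 1) by (split; nra).
  pose proof (acos_bound u) as Hb.
  pose proof (cos_acos u Hu) as Hcu.
  set (s := sin (acos u)).
  assert (Hs : 0 <= s) by (apply sin_ge_0; lra).
  assert (Hsc : s^2 + u^2 = 1) by (pose proof (sc2 (acos u)); rewrite Hcu in *; exact H0).
  assert (Hrs : r * s = Rabs y).
  { apply Rsqr_inj. nra. apply Rabs_pos. rewrite <- Rsqr_abs. unfold Rsqr. nra. }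
  assert (HArg : Arg (x,y) = if Rle_dec 0 y then acos u else - acos u) by reflexivity.
  assert (Hpol : (x, y) = (r * cos (Arg (x,y)), r * sin (Arg (x,y)))).
  { rewrite HArg. destruct Rle_dec.
    - rewrite Hcu. fold s. rewrite Rabs_right in Hrs by lra. f_equal; lra.
    - rewrite cos_neg, sin_neg, Hcu. fold s. rewrite Rabs_left in Hrs by lra. f_equal; lra. }
  assert (HAb : -PI < Arg (x,y) <= PI).
  { rewrite HArg. destruct Rle_dec. lra.
    destruct (Req_dec (acos u) PI) as [E|E].
    - exfalso. unfold s in Hrs. rewrite E, sin_PI in Hrs. rewrite Rabs_left in Hrs; lra.
    - lra. }
  assert (HAabs : Rabs (Arg (x,y)) = acos u).
  { rewrite HArg. destruct Rle_dec. apply Rabs_right; lra.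
    rewrite Rabs_Ropp. apply Rabs_right; lra. }
  split; [exact HAb|].
  assert (Hv : -1 <= a / r <= 1).
  { split; apply (Rmult_le_reg_r r); try lra; unfold Rdiv; rewrite Rmult_assoc, Rinv_l; nra. }
  pose proof (acos_bound (a/r)) as Hb2.
  pose proof (cos_acos _ Hv) as Hca.
  assert (Hv1 : a / r < 1) by (apply (Rmult_lt_reg_r r); try lra; unfold Rdiv; rewrite Rmult_assoc, Rinv_l; nra).
  assert (Hv2 : u < a / r) by (apply (Rmult_lt_reg_r r); try lra; unfold Rdiv; rewrite Rmult_assoc, Rinv_l; nra).
  exists r, (acos (a / r)). split; [lra|]. split; [|split; [|exact Hpol]].
  - rewrite HAabs. split.
    + destruct (Req_dec (acos (a/r)) 0) as [E|E]; [|lra].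
      rewrite E, cos_0 in Hca. lra.
    + destruct (Rlt_le_dec (acos (a/r)) (acos u)) as [L|L]; [exact L|].
      exfalso. destruct (Req_dec (acos (a/r)) (acos u)) as [E|E].
      * rewrite E, Hcu in Hca. lra.
      * assert (cos (acos (a/r)) < cos (acos u)) by (apply cos_decreasing_1; lra). lra.
  - rewrite Hca. field. lra.
Qed.

Lemma G1 tau psi r th s : 0 < tau -> -PI < psi <= PI -> 0 < r -> 0 < th < Rabs psi -> 0 < s ->
  (Rabs psi - th) / (r * sin th) = tau * s ->
  scaled s (Gamma_c psi tau) (r * cos th) (r * cos psi, r * sin psi).
Proof.
  intros Ht Hp Hr Hth Hs E.
  pose proof (Rabs_le_PI psi Hp) as HA.
  assert (Hsn : 0 < sin th) by (apply sin_gt_0; lra).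
  assert (E' : Rabs psi - th = tau * s * r * sin th).
  { rewrite <- E. field. split; lra. }
  unfold scaled, Gamma_c, I_c, a_fun, rho_fun.
  destruct (Rle_dec 0 psi) as [P|P].
  - rewrite Rabs_right in * by lra.
    set (Om := (psi - th) / tau).
    assert (HO : Om = s * r * sin th) by (unfold Om; rewrite E'; field; lra).
    assert (Hph : tau * Om - psi = - th) by (unfold Om; field; lra).
    eexists; eexists; split.
    + exists Om. split; [|split; reflexivity]. replace (tau * Om) with (psi - th) by (unfold Om; field; lra). lra.
    + rewrite Hph, cos_neg, sin_neg, HO, !cmul_eq. split.
      * field. split; lra.
      * f_equal; field; split; lra.
  - rewrite Rabs_left in * by lra.
    set (Om := (psi + th) / tau).
    assert (HO : Om = - (s * r * sin th)) by (unfold Om; replace (psi + th) with (- (- psi - th)) by ring; rewrite E'; field; lra).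
    assert (Hph : tau * Om - psi = th) by (unfold Om; field; lra).
    eexists; eexists; split.
    + exists Om. split; [|split; reflexivity].
      replace (tau * Om) with (psi + th) by (unfold Om; field; lra). lra.
    + rewrite Hph, HO, !cmul_eq. split.
      * field. split; lra.
      * f_equal; field; split; lra.
Qed.

Lemma G2 tau psi s a w : 0 < tau -> -PI < psi <= PI -> 0 < s ->
  scaled s (Gamma_c psi tau) a w ->
  exists r th, 0 < r /\ 0 < th < Rabs psi /\ a = r * cos th /\
    w = (r * cos psi, r * sin psi) /\ (Rabs psi - th) / (r * sin th) = tau * s.
Proof.
  intros Ht Hp Hs [b [z [[Om [HI [Hb Hz]]] [Ha Hw]]]].
  subst a w b z. unfold I_c, a_fun, rho_fun in *.
  rewrite !cmul_eq.
  destruct (Rle_dec 0 psi) as [P|P].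
  - rewrite Rabs_right by lra.
    set (th := psi - tau * Om).
    assert (Hsn : 0 < sin th) by (apply sin_gt_0; unfold th; lra).
    assert (HO : 0 < Om) by nra.
    replace (tau * Om - psi) with (- th) by (unfold th; ring).
    rewrite cos_neg, sin_neg.
    exists (Om / (s * sin th)), th.
    split; [apply Rdiv_lt_0_compat; nra|].
    split; [unfold th; lra|].
    split; [field; lra|].
    split; [f_equal; field; lra|].
    replace (psi - th) with (tau * Om) by (unfold th; ring). field. lra.
  - rewrite Rabs_left by lra.
    set (th := tau * Om - psi).
    assert (Hsn : 0 < sin th) by (apply sin_gt_0; unfold th; lra).
    assert (HO : Om < 0) by nra.
    fold th.
    exists (- Om / (s * sin th)), th.
    split; [apply Rdiv_lt_0_compat; nra|].
    split; [unfold th; lra|].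
    split; [field; lra|].
    split; [f_equal; field; lra|].
    replace (- psi - th) with (- (tau * Om)) by (unfold th; ring). field. lra.
Qed.

Theorem mainTheorem19 (tau : R) (Htau : 0 < tau) :
  (forall psi : R, - PI < psi <= PI ->
     forall (a : R) (w : C),
       (D_c a w /\ Arg w = psi /\ tau_c a w > tau) <->
       (exists s : R, s > 1 /\ scaled s (Gamma_c psi tau) a w))
  /\
  (forall (a : R) (w : C),
     (D_c a w /\ tau_c a w > tau) <->
     (exists psi : R, - PI < psi <= PI /\
        exists s : R, s > 1 /\ scaled s (Gamma_c psi tau) a w)).
Proof.
  assert (P1 : forall psi : R, - PI < psi <= PI ->
     forall (a : R) (w : C),
       (D_c a w /\ Arg w = psi /\ tau_c a w > tau) <->
       (exists s : R, s > 1 /\ scaled s (Gamma_c psi tau) a w)).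
  { intros psi Hp a w. split.
    - intros [HD [HA HT]].
      destruct (polar_inv a w HD) as [_ [r [th [Hr [Hth [Ha Hw]]]]]].
      rewrite HA in Hth, Hw. subst a w.
      destruct (polar_form psi r th Hp Hr Hth) as [_ [_ Et]].
      exists (tau_c (r * cos th) (r * cos psi, r * sin psi) / tau).
      split.
      + apply (Rmult_lt_reg_r tau); [lra|]. unfold Rdiv. rewrite Rmult_assoc, Rinv_l; lra.
      + apply G1; try lra.
        * apply Rdiv_lt_0_compat; lra.
        * rewrite <- Et. field. lra.
    - intros [s [Hs HS]].
      destruct (G2 tau psi s a w Htau Hp ltac:(lra) HS) as [r [th [Hr [Hth [Ha [Hw E]]]]]].
      subst a w.
      destruct (polar_form psi r th Hp Hr Hth) as [HD [HA Et]].
      split; [exact HD|]. split; [exact HA|]. rewrite Et, E. nra. }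
  split; [exact P1|].
  intros a w. split.
  - intros [HD HT].
    destruct (polar_inv a w HD) as [Hb _].
    exists (Arg w). split; [exact Hb|]. apply (P1 (Arg w) Hb). auto.
  - intros [psi [Hp H]]. apply (P1 psi Hp) in H. tauto.
Qed.
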